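(* Let $f\in\mathbb{R}[x,y]$ be a polynomial of degree $n\ge 3$. Then, for $k=1,2$, the set of singular points at infinity of $\mathbb{Y}_k$ is $\{(u,v,0)\in\mathbb{S}^2: f_n(u,v)=0\}$.
   Context: Write $f=\sum_{i=0}^n f_i$ with $f_i$ homogeneous of degree $i$, $F(u,v,\omega)=\sum_{i=0}^n\omega^{n-i}f_i(u,v)$, $A=-uF_{uu}-vF_{uv}$, $B=-uF_{uv}-vF_{vv}$, $S=u^2F_{uu}+2uvF_{uv}+v^2F_{vv}$, and let $Q=\omega^2F_{uu}du^2+2\omega^2F_{uv}du\,dv+\omega^2F_{vv}dv^2+2\omega A\,du\,d\omega+2\omega B\,dv\,d\omega+S\,d\omega^2$ restricted to the unit sphere $\mathbb{S}^2\subset\mathbb{R}^3=\{(u,v,\omega)\}$ (the analytic extension to the Poincaré sphere of the second fundamental form $f_{xx}dx^2+2f_{xy}dxdy+f_{yy}dy^2$). $\mathbb{Y}_1,\mathbb{Y}_2$ are the two fields of lines on $\mathbb{S}^2$ given by $Q_p(\xi,\xi)=0$, $\xi\in T_p\mathbb{S}^2$. A singular point of $\mathbb{Y}_k$ is a point $p$ where the restriction of $Q_p$ to $T_p\mathbb{S}^2$ vanishes identically; a singular point at infinity is one lying on the equator $\{\omega=0\}$. *)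

(* Defs.v *)
From HB Require Import structures.
From mathcomp Require Import all_boot all_order all_algebra.
From mathcomp Require Import mpoly.
Set Implicit Arguments. Unset Strict Implicit. Unset Printing Implicit Defensive.
Import Order.TTheory GRing.Theory Num.Theory.
Local Open Scope ring_scope.

(* Variables: for {mpoly R[2]} : x = 'X_0, y = 'X_1.
   For {mpoly R[3]} : u = 'X_0, v = 'X_1, omega = 'X_2. *)
Definition o0 : 'I_3 := @Ordinal 3 0 isT.
Definition o1 : 'I_3 := @Ordinal 3 1 isT.
Definition o2 : 'I_3 := @Ordinal 3 2 isT.

Section Defs.
Variable R : realFieldType.

Definition hcomp (i : nat) (f : {mpoly R[2]}) : {mpoly R[2]} :=
  \sum_(m <- msupp f | mdeg m == i) f@_m *: 'X_[m].

Definition Fhom (n : nat) (f : {mpoly R[2]}) : {mpoly R[3]} :=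
  \sum_(i < n.+1) 'X_o2 ^+ (n - i) *
     (hcomp i f \mPo [tuple ('X_o0 : {mpoly R[3]}); 'X_o1]).

Definition ev3 (P : {mpoly R[3]}) (u v w : R) : R := P.@[fun i : 'I_3 => nth 0 [:: u; v; w] i].

Definition Qform (n : nat) (f : {mpoly R[2]}) (u v w a b c : R) : R :=
  let F := Fhom n f in
  let Fuu := ev3 (mderiv o0 (mderiv o0 F)) u v w in
  let Fuv := ev3 (mderiv o1 (mderiv o0 F)) u v w in
  let Fvv := ev3 (mderiv o1 (mderiv o1 F)) u v w in
  let A := - u * Fuu - v * Fuv in
  let B := - u * Fuv - v * Fvv in
  let S := u ^+ 2 * Fuu + 2 * u * v * Fuv + v ^+ 2 * Fvv in
  w ^+ 2 * Fuu * a ^+ 2 + 2 * w ^+ 2 * Fuv * a * b + w ^+ 2 * Fvv * b ^+ 2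
  + 2 * w * A * a * c + 2 * w * B * b * c + S * c ^+ 2.

Definition on_sphere (u v w : R) : Prop := u ^+ 2 + v ^+ 2 + w ^+ 2 = 1.

(* p = (u,v,w) on S^2 is a singular point of Y_1 (equivalently Y_2):
   Q_p restricted to T_p S^2 vanishes identically. *)
Definition singular_point (n : nat) (f : {mpoly R[2]}) (u v w : R) : Prop :=
  on_sphere u v w /\
  forall a b c : R, u * a + v * b + w * c = 0 -> Qform n f u v w a b c = 0.

Definition ev2 (P : {mpoly R[2]}) (u v : R) : R := P.@[fun i : 'I_2 => nth 0 [:: u; v] i].

End Defs.

(* Main.v *)
Require Import Defs.
From HB Require Import structures.
From mathcomp Require Import all_boot all_order all_algebra.
From mathcomp Require Import mpoly.
From mathcomp Require Import ring.
Import Order.TTheory GRing.Theory Num.Theory.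
Local Open Scope ring_scope.

Section S.
Variable R : realFieldType.
Local Notation P3 := {mpoly R[3]}.

Lemma dX (i j : 'I_3) : mderiv i ('X_j : P3) = (j == i)%:R.
Proof.
rewrite mderivX mnm1E; case: eqP => [->|_].
  by rewrite scale1r (_ : U_(i) - U_(i) = 0)%MM ?mpolyX0 //; apply/mnmP => k; rewrite !mnmE subnn.
by rewrite scale0r.
Qed.

Definition E (P : P3) : P3 := 'X_o0 * mderiv o0 P + 'X_o1 * mderiv o1 P.

Lemma ED P Q : E (P + Q) = E P + E Q.
Proof. rewrite /E !mderivD; ring. Qed.
Lemma EZ c P : E (c *: P) = c *: E P.
Proof. by rewrite /E !mderivZ scalerDr !scalerAr. Qed.
Lemma EM P Q : E (P * Q) = E P * Q + P * E Q.
Proof. rewrite /E !mderivM; ring. Qed.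
Lemma Esum (I : Type) (r : seq I) (p : pred I) (F : I -> P3) :
  E (\sum_(i <- r | p i) F i) = \sum_(i <- r | p i) E (F i).
Proof.
elim/big_rec2: _ => [|i y1 y2 _ <-]; last by rewrite ED.
by rewrite /E !mderiv0 !mulr0 addr0.
Qed.
Lemma EX0 : E 'X_o0 = 'X_o0.
Proof. by rewrite /E !dX /=; ring. Qed.
Lemma EX1 : E 'X_o1 = 'X_o1.
Proof. by rewrite /E !dX /=; ring. Qed.
Lemma EX2 : E 'X_o2 = 0.
Proof. by rewrite /E !dX /=; ring. Qed.
Lemma Eexp P k : E (P ^+ k) = k%:R * P ^+ k.-1 * E P.
Proof.
elim: k => [|k IH]; first by rewrite expr0 /E -mpolyC1 !mderivC; ring.
rewrite exprS EM IH; case: k IH => [|k] IH /=; first by rewrite expr0; ring.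
rewrite exprS -!natr1; ring.
Qed.

Lemma Euler2 (P : P3) :
  'X_o0 ^+ 2 * mderiv o0 (mderiv o0 P) + 2 * 'X_o0 * 'X_o1 * mderiv o1 (mderiv o0 P)
  + 'X_o1 ^+ 2 * mderiv o1 (mderiv o1 P) = E (E P) - E P.
Proof.
rewrite /E !mderivD !mderivM !dX /= (mderiv_comm o0 o1 P) /=; ring.
Qed.

Lemma Eexp1 P k : E P = P -> E (P ^+ k) = k%:R *: P ^+ k.
Proof.
move=> EP; rewrite Eexp EP; case: k => [|k]; first by rewrite !mul0r scale0r.
by rewrite -mulrA -exprSr scaler_nat mulr_natl.
Qed.

Definition lq : 2.-tuple P3 := [tuple ('X_o0 : P3); 'X_o1].

Lemma compX (m : 'X_{1..2}) :
  'X_[m] \mPo lq = 'X_o0 ^+ (m ord0) * 'X_o1 ^+ (m ord_max).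
Proof.
rewrite comp_mpolyX big_ord_recr big_ord_recr big_ord0 /= mul1r.
by rewrite (_ : widen_ord _ _ = ord0) //; apply/val_inj.
Qed.

Lemma EcompX (m : 'X_{1..2}) : E ('X_[m] \mPo lq) = (mdeg m)%:R *: ('X_[m] \mPo lq).
Proof.
rewrite compX EM !Eexp1 ?EX0 ?EX1 // mdegE big_ord_recr big_ord_recr big_ord0 /=.
rewrite -scalerAl -scalerAr natrD scalerDl add0n; congr (_ + _).
by rewrite (_ : widen_ord _ _ = ord0) //; apply/val_inj.
Qed.

Lemma Ehcomp i f : E (hcomp i f \mPo lq) = i%:R *: (hcomp i f \mPo lq).
Proof.
rewrite /hcomp !raddf_sum Esum; apply: eq_bigr => m /eqP <- /=.
by rewrite comp_mpolyZ EZ EcompX scalerA mulrC -scalerA.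
Qed.

Lemma EX2term k (G : P3) : E ('X_o2 ^+ k * G) = 'X_o2 ^+ k * E G.
Proof. by rewrite EM Eexp EX2 mulr0 mul0r add0r. Qed.

Lemma Esumterm n f (c : nat -> R) :
  E (\sum_(i < n.+1) c i *: ('X_o2 ^+ (n - i) * (hcomp i f \mPo lq)))
  = \sum_(i < n.+1) (c i * i%:R) *: ('X_o2 ^+ (n - i) * (hcomp i f \mPo lq)).
Proof.
rewrite Esum; apply: eq_bigr => i _.
by rewrite EZ EX2term Ehcomp -scalerAr scalerA.
Qed.

Lemma EEF n f :
  E (E (Fhom n f)) - E (Fhom n f) =
  \sum_(i < n.+1) ((i%:R * i%:R - i%:R) : R) *: ('X_o2 ^+ (n - i) * (hcomp i f \mPo lq)).
Proof.
have -> : Fhom n f = \sum_(i < n.+1) (fun _ => 1) i *: ('X_o2 ^+ (n - i) * (hcomp i f \mPo lq)).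
  by rewrite /Fhom; apply: eq_bigr => i _; rewrite scale1r.
rewrite (Esumterm n f (fun _ => 1)) (Esumterm n f (fun i => 1 * i%:R)) -sumrB; apply: eq_bigr => i _.
by rewrite scalerBl mul1r.
Qed.

Lemma mevalXn (w : 'I_3 -> R) (P : P3) k : meval w (P ^+ k) = (meval w P) ^+ k.
Proof. by elim: k => [|k IH]; rewrite ?expr0 ?meval1 // !exprS mevalM IH. Qed.

Lemma ev2_comp (P : {mpoly R[2]}) u v : ev3 (P \mPo lq) u v 0 = ev2 P u v.
Proof.
rewrite /ev3 /ev2 comp_mpoly_meval; apply: meval_eq => i.
case: i => [[|[|//]] Hi] /=; by rewrite /tnth /= mevalXU.
Qed.

Lemma evEEF n f u v :
  ev3 (E (E (Fhom n f)) - E (Fhom n f)) u v 0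
  = (n%:R * n%:R - n%:R) * ev2 (hcomp n f) u v.
Proof.
rewrite /ev3 EEF raddf_sum big_ord_recr /= big1 => [|i _].
  rewrite add0r mevalZ mevalM subnn expr0 meval1 mul1r.
  by rewrite -ev2_comp.
rewrite mevalZ mevalM mevalXn mevalXU /= expr0n.
have -> : (n - i == 0)%N = false by rewrite subn_eq0 leqNgt ltn_ord.
by rewrite mul0r mulr0.
Qed.

Lemma evEuler n (f : {mpoly R[2]}) u v :
  let F := Fhom n f in
  u ^+ 2 * ev3 (mderiv o0 (mderiv o0 F)) u v 0
  + 2 * u * v * ev3 (mderiv o1 (mderiv o0 F)) u v 0
  + v ^+ 2 * ev3 (mderiv o1 (mderiv o1 F)) u v 0
  = (n%:R * n%:R - n%:R) * ev2 (hcomp n f) u v.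
Proof.
move=> F; rewrite -evEEF -Euler2 /ev3 !mevalD !mevalM !mevalXU /= mevalMn meval1 /F; ring.
Qed.
End S.

Lemma Qform_w0 (R : realFieldType) n (f : {mpoly R[2]}) u v a b c :
  Qform n f u v 0 a b c = ((n%:R * n%:R - n%:R) * ev2 (hcomp n f) u v) * c ^+ 2.
Proof. rewrite -evEuler /Qform; cbv zeta; ring. Qed.

Theorem corollary1 (R : realFieldType) (n : nat) (f : {mpoly R[2]}) :
  (3 <= n)%N -> msize f = n.+1 ->
  forall u v w : R,
    (singular_point n f u v w /\ w = 0) <->
    (on_sphere u v w /\ w = 0 /\ ev2 (hcomp n f) u v = 0).
Proof.
move=> Hn _ u v w; split.
  case=> [[Hs HQ] Hw]; subst w; split=> //; split=> //.
  have H0 : u * 0 + v * 0 + 0 * 1 = 0 :> R by ring.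
  have := HQ 0 0 1 H0; rewrite Qform_w0 expr1n mulr1 => /eqP.
  have -> : (n%:R * n%:R - n%:R : R) = n%:R * (n%:R - 1) by ring.
  rewrite !mulf_eq0 subr_eq0 pnatr_eq0 (_ : 1 = 1%:R :> R) // eqr_nat.
  have -> : (n == 0)%N = false by apply/negbTE/eqP => E; rewrite E in Hn.
  have -> : (n == 1)%N = false by apply/negbTE/eqP => E; rewrite E in Hn.
  by move/eqP.
case=> Hs [Hw He]; subst w; split=> //; split=> // a b c _.
by rewrite Qform_w0 He mulr0 mul0r.
Qed.
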